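(* Consider the decoding setting fixed in the context. Let $t_j=|\mathcal{A}_j|$ and run the index-collision-resolution procedure with $\hat t_j=t_j$. Assume that (no $E_1$) $t_j\le T$, and that (no $E_2$) whenever, during this run, the decoder $D$ of $\mathcal{C}$ is applied to a vector of the form $[\mathbf{c}+\tilde{\mathbf{z}}_j/2^{\ell}]\bmod 2$ with $\mathbf{c}\in\mathcal{C}$ and $\ell$ a nonnegative integer, it outputs $\mathbf{c}$. Then, for every iteration $\ell\ge1$ performed by the procedure: (i) $\hat t^{(\ell)}_j=|\mathcal{A}^{(\ell)}_j|$; (ii) $\mathbf{y}^{(\ell)}_j=\sum_{i\in\mathcal{A}^{(\ell)}_j}\mathbf{x}_{i,j}+\mathbf{z}_j/2^{\ell-1}$; (iii) the decoding $\Phi(\mathbf{y}^{(\ell)}_j,\hat t^{(\ell)}_j)$ of the $\ell$-th iteration is successful; (iv) $\mathcal{L}^{(\ell)}=\mathcal{U}(\mathcal{A}^{(\ell)}_j\setminus\mathcal{B}^{(\ell)}_j)$. Moreover, for the final iteration $\tau$, $\mathcal{B}^{(\tau)}_j=\emptyset$, and hence $\mathcal{L}^{(\tau)}=\mathcal{U}(\mathcal{A}^{(\tau)}_j)$.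
   Context: Codes. Let $\mathbf{H}\in\{0,1\}^{m_p\times n_p}$ be a parity-check matrix of a binary linear code $\mathcal{C}_{\mathrm{aux}}$ of length $n_p$ with minimum Hamming distance $d$, and let $T=\lfloor (d-1)/2\rfloor$; denote the $u$-th column of $\mathbf{H}$ by $\mathbf{h}_u$. Let $\mathbf{G}\in\{0,1\}^{m_p\times n}$ be a generator matrix (full row rank) of a binary linear code $\mathcal{C}$ of length $n$ and dimension $m_p$. For $u\in\{1,\dots,n_p\}$ put $\mathbf{c}(u)=\mathbf{h}_u^T\mathbf{G}\bmod 2$ and define $\mathbf{x}(u)\in\mathbb{R}^n$ componentwise by $\mathbf{x}(u)_k=2a(\mathbf{c}(u)_k-1/2)$, where $a>0$ is fixed. Channel. In sub-block $j$, a finite set $\mathcal{A}_j$ of users transmits; user $i\in\mathcal{A}_j$ chose $u_i\in\{1,\dots,n_p\}$ and sends $\mathbf{x}_{i,j}=\mathbf{x}(u_i)$. The received vector is $\mathbf{y}_j=\sum_{i\in\mathcal{A}_j}\mathbf{x}(u_i)+\mathbf{z}_j$ with noise $\mathbf{z}_j\in\mathbb{R}^n$; put $\tilde{\mathbf{z}}_j=\mathbf{z}_j/(2a)$. ''$\bmod 2$'' on real vectors is componentwise reduction into $[0,2)$. Basic decoder $\Phi$. For $\mathbf{y}\in\mathbb{R}^n$ and integer $\hat t\ge0$: form $\tilde{\mathbf{y}}=[\mathbf{y}/(2a)+\hat t/2]\bmod 2$; apply a decoder $D$ for $\mathcal{C}$, obtaining $\tilde{\mathbf{c}}\in\mathcal{C}$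 (or a flagged error); recover the unique $\tilde{\mathbf{h}}$ with $\tilde{\mathbf{h}}^T\mathbf{G}=\tilde{\mathbf{c}}\bmod 2$; apply the bounded-distance syndrome decoder of $\mathcal{C}_{\mathrm{aux}}$, which returns the unique $S\subseteq\{1,\dots,n_p\}$ with $|S|\le T$ and $\sum_{u\in S}\mathbf{h}_u=\tilde{\mathbf{h}}\bmod 2$ if it exists and flags an error otherwise. $\Phi(\mathbf{y},\hat t)$ is the returned set (or $\emptyset$ with a flagged error). ICR procedure for an estimate $\hat t_j$: $\mathbf{y}^{(1)}_j=\mathbf{y}_j$, $\hat t^{(1)}_j=\hat t_j$, $\mathcal{L}^{(1)}=\Phi(\mathbf{y}^{(1)}_j,\hat t^{(1)}_j)$. For $\ell\ge1$: if $|\mathcal{L}^{(\ell)}|=\hat t^{(\ell)}_j$, stop with $\tau=\ell$ and return $\mathcal{L}^{(1)},\dots,\mathcal{L}^{(\tau)}$; if $|\mathcal{L}^{(\ell)}|>\hat t^{(\ell)}_j$, return an error; if $|\mathcal{L}^{(\ell)}|<\hat t^{(\ell)}_j$, set $\hat t^{(\ell+1)}_j=(\hat t^{(\ell)}_j-|\mathcal{L}^{(\ell)}|)/2$ (error if not an integer), $\mathbf{y}^{(\ell+1)}_j=(\mathbf{y}^{(\ell)}_j-\sum_{u\in\mathcal{L}^{(\ell)}}\mathbf{x}(u))/2$, $\mathcal{L}^{(\ell+1)}=\Phi(\mathbf{y}^{(\ell+1)}_j,\hat t^{(\ell+1)}_j)$, and continue. Auxiliary sets. For $u\in\{1,\dots,n_p\}$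 let $\mathcal{A}^{(1)}_j(u)=\{i\in\mathcal{A}_j:u_i=u\}$. For $\ell\ge1$, let $\mathcal{B}^{(\ell)}_j(u)\subseteq\mathcal{A}^{(\ell)}_j(u)$ be an (arbitrary) subset with $|\mathcal{B}^{(\ell)}_j(u)|=2\lfloor|\mathcal{A}^{(\ell)}_j(u)|/2\rfloor$, and $\mathcal{A}^{(\ell+1)}_j(u)\subseteq\mathcal{B}^{(\ell)}_j(u)$ an (arbitrary) subset with $|\mathcal{A}^{(\ell+1)}_j(u)|=|\mathcal{B}^{(\ell)}_j(u)|/2$. Put $\mathcal{A}^{(\ell)}_j=\bigcup_u\mathcal{A}^{(\ell)}_j(u)$, $\mathcal{B}^{(\ell)}_j=\bigcup_u\mathcal{B}^{(\ell)}_j(u)$. For a set $\mathcal{S}$ of users, $\mathcal{U}(\mathcal{S})=\{u_i:i\in\mathcal{S}\}$. *)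

(* Defs.v *)
From HB Require Import structures.
From mathcomp Require Import all_boot all_order all_algebra.
From mathcomp Require Import reals.
Set Implicit Arguments. Unset Strict Implicit. Unset Printing Implicit Defensive.
Import Order.TTheory GRing.Theory Num.Theory.
Local Open Scope ring_scope.

Definition f2R {R : pzRingType} (b : 'F_2) : R := (nat_of_ord b)%:R.

Definition wt {k : nat} (v : 'rV['F_2]_k) : nat := #|[set j | v 0 j != 0]|.

Definition is_min_dist {mp np : nat} (H : 'M['F_2]_(mp, np)) (d : nat) : Prop :=
  (exists v : 'rV['F_2]_np, [/\ H *m v^T = 0, v != 0 & wt v = d]) /\
  (forall v : 'rV['F_2]_np, H *m v^T = 0 -> v != 0 -> (d <= wt v)%N).

Definition in_code {mp n : nat} (G : 'M['F_2]_(mp, n)) (c : 'rV['F_2]_n) : Prop :=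
  exists m : 'rV['F_2]_mp, c = m *m G.

Definition mod2 {R : realType} (r : R) : R := r - 2 * (Num.floor (r / 2))%:~R.
Definition mod2v {R : realType} {n : nat} (v : 'rV[R]_n) : 'rV[R]_n := map_mx mod2 v.

Section Setting.
Context {R : realType} {mp np n : nat}
  (H : 'M['F_2]_(mp, np)) (G : 'M['F_2]_(mp, n)) (a : R) (T : nat)
  (D : 'rV[R]_n -> option 'rV['F_2]_n).

Definition cw (u : 'I_np) : 'rV['F_2]_n := (col u H)^T *m G.

Definition xsig (u : 'I_np) : 'rV[R]_n :=
  \row_k (2 * a * (f2R (cw u 0 k) - 2^-1)).

Definition D_input (y : 'rV[R]_n) (t : nat) : 'rV[R]_n :=
  mod2v (map_mx (fun r => r / (2 * a) + t%:R / 2) y).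

(* Bounded-distance syndrome decoder of C_aux: the (unique, when 2T < d) set S
   with |S| <= T and sum_{u in S} h_u = h; None = flagged error. *)
Definition synd_dec (h : 'rV['F_2]_mp) : option {set 'I_np} :=
  [pick S : {set 'I_np} | (#|S| <= T)%N && (\sum_(u in S) (col u H)^T == h)].

(* Basic decoder Phi; None = flagged error (the returned set is then empty).
   h~ with h~^T G = c~ is recovered as c~ *m pinvmx G (unique as G has full
   row rank and c~ is a codeword). *)
Definition Phi (y : 'rV[R]_n) (t : nat) : option {set 'I_np} :=
  match D (D_input y t) with
  | None => None
  | Some c => synd_dec (c *m pinvmx G)
  end.

Definition Lset (y : 'rV[R]_n) (t : nat) : {set 'I_np} := odflt set0 (Phi y t).

(* ICR state: index k (0-based) corresponds to iteration l = k+1. *)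
Fixpoint icr_state (y0 : 'rV[R]_n) (t0 : nat) (k : nat) : 'rV[R]_n * nat :=
  match k with
  | 0 => (y0, t0)
  | k'.+1 =>
      let st := icr_state y0 t0 k' in
      let L := Lset st.1 st.2 in
      (2^-1 *: (st.1 - \sum_(u in L) xsig u), ((st.2 - #|L|) %/ 2)%N)
  end.

Definition icr_y y0 t0 k := (icr_state y0 t0 k).1.
Definition icr_t y0 t0 k := (icr_state y0 t0 k).2.
Definition icr_L y0 t0 k := Lset (icr_y y0 t0 k) (icr_t y0 t0 k).

(* Iteration k is performed: every earlier iteration k' neither stopped
   (|L| = t), nor raised an error (|L| > t, or t - |L| odd). *)
Definition icr_reached y0 t0 k : Prop :=
  forall k', (k' < k)%N ->
    (#|icr_L y0 t0 k'| < icr_t y0 t0 k')%N /\ ~~ odd (icr_t y0 t0 k' - #|icr_L y0 t0 k'|).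

End Setting.

(* Auxiliary sets A^(l)(u), B^(l)(u) (0-based index k = l-1). *)
Definition aux_sets {I : finType} {np : nat} (A : {set I}) (uf : I -> 'I_np)
  (Aset Bset : nat -> 'I_np -> {set I}) : Prop :=
  (forall u, Aset 0%N u = [set i in A | uf i == u]) /\
  (forall k u, Bset k u \subset Aset k u /\ #|Bset k u| = (2 * (#|Aset k u| %/ 2))%N) /\
  (forall k u, Aset k.+1 u \subset Bset k u /\ #|Aset k.+1 u| = (#|Bset k u| %/ 2)%N).

Definition Aall {I : finType} {np : nat} (Aset : nat -> 'I_np -> {set I}) k : {set I} :=
  \bigcup_(u : 'I_np) Aset k u.

Definition Uset {I : finType} {np : nat} (uf : I -> 'I_np) (S : {set I}) : {set 'I_np} :=
  uf @: S.

(* Main.v *)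
Set Warnings "-all".
Require Import Defs.
From HB Require Import structures.
From mathcomp Require Import all_boot all_order all_algebra.
From mathcomp Require Import reals.
From mathcomp Require Import zify ring lra.
Import Order.TTheory GRing.Theory Num.Theory.
Local Open Scope ring_scope.

Lemma mod2_nat (R : realType) (N : nat) (w : R) :
  mod2 (N%:R + w) = mod2 ((N %% 2)%N%:R + w).
Proof.
rewrite {1}(divn_eq N 2) natrD -addrA [_ + (_ + w)]addrC /mod2.
set r := (_ + w).
have -> : (r + (N %/ 2 * 2)%N%:R) / 2 = r / 2 + ((N %/ 2)%:Z)%:~R.
  rewrite natrM mulrDl; congr (_ + _).
  by rewrite -mulrA divff ?mulr1 ?pnatr_eq0.
rewrite floorDrz ?intr_int // intrKfloor intrD natrM.
have -> : ((N %/ 2)%:Z)%:~R = ((N %/ 2)%:R : R) by [].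
move: (_%:~R) => f; set q := ((N %/ 2)%:R : R).
lra.
Qed.

Lemma val_sumF2 (I : Type) (s : seq I) (P : pred I) (b : I -> 'F_2) :
  nat_of_ord (\sum_(i <- s | P i) b i) = ((\sum_(i <- s | P i) nat_of_ord (b i)) %% 2)%N.
Proof.
elim/big_rec2: _ => [//|i x y _ H].
have -> : forall u v : 'F_2, nat_of_ord (u + v) = ((u + v) %% 2)%N by [].
by rewrite H modnDmr.
Qed.

Lemma mod2_sumF2 (R : realType) (I : Type) (s : seq I) (P : pred I) (b : I -> 'F_2) (w : R) :
  mod2 (\sum_(i <- s | P i) f2R (b i) + w) = mod2 (f2R (\sum_(i <- s | P i) b i) + w).
Proof.
rewrite /f2R val_sumF2 -mod2_nat natr_sum.
by [].
Qed.

Lemma F2v_muln m (v : 'rV['F_2]_m) n : v *+ n = v *+ odd n.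
Proof.
elim: n => [//|n IH]; rewrite mulrS IH /=.
case: (odd n) => /=; last by rewrite addr0.
have -> : v + v *+ 1 = (1 + 1 : 'F_2) *: v by rewrite scalerDl scale1r.
have -> : (1 + 1 : 'F_2) = 0 by apply/eqP.
by rewrite scale0r.
Qed.

Lemma sum_union (I : finType) np (uf : I -> 'I_np) (S : 'I_np -> {set I})
  (V : nmodType) (F : 'I_np -> V) :
  (forall u i, i \in S u -> uf i = u) ->
  \sum_(i in \bigcup_(u : 'I_np) S u) F (uf i) = \sum_(u : 'I_np) F u *+ #|S u|.
Proof.
move=> HS.
rewrite (partition_big uf predT) //=; apply: eq_bigr => u _.
rewrite -sumr_const.
rewrite (eq_bigl (fun i => i \in S u)); last first.
  move=> i /=; apply/idP/idP.
    case/andP => /bigcupP [u' _ Hi] /eqP Hu.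
    by have := HS _ _ Hi; rewrite Hu => Eu; rewrite Eu.
  move=> Hi; rewrite (HS _ _ Hi) eqxx andbT.
  by apply/bigcupP; exists u.
by apply: eq_bigr => i /HS ->.
Qed.

Lemma card_union (I : finType) np (uf : I -> 'I_np) (S : 'I_np -> {set I}) :
  (forall u i, i \in S u -> uf i = u) ->
  #|\bigcup_(u : 'I_np) S u| = (\sum_(u : 'I_np) #|S u|)%N.
Proof.
move=> HS.
have := @sum_union I np uf S nat (fun _ => 1%N) HS.
rewrite sum1_card => ->.
by apply: eq_bigr => u _; rewrite natn.
Qed.

Lemma ind_mul mp np (H : 'M['F_2]_(mp, np)) (S : {set 'I_np}) :
  (\row_u ((u \in S)%:R : 'F_2)) *m H^T = \sum_(u in S) (col u H)^T.
Proof.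
rewrite mulmx_sum_row [RHS]big_mkcond /=; apply: eq_bigr => u _.
by rewrite mxE tr_col; case: (u \in S); rewrite ?scale1r ?scale0r.
Qed.

Lemma synd_unique mp np (H : 'M['F_2]_(mp, np)) d (S1 S2 : {set 'I_np}) :
  is_min_dist H d -> (#|S1| <= (d.-1) %/ 2)%N -> (#|S2| <= (d.-1) %/ 2)%N ->
  \sum_(u in S1) (col u H)^T = \sum_(u in S2) (col u H)^T -> S1 = S2.
Proof.
move=> [_ Hmin] H1 H2 Heq.
case/boolP: [exists u, (u \in S1) != (u \in S2)]; last first.
  move/existsPn => Hall; apply/setP => u.
  by have := Hall u; rewrite negbK => /eqP.
case/existsP => u0 Hu0.
pose v : 'rV['F_2]_np := \row_u ((u \in S1)%:R - (u \in S2)%:R).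
have Hv : v = \row_u ((u \in S1)%:R : 'F_2) - \row_u ((u \in S2)%:R : 'F_2).
  by apply/rowP => u; rewrite !mxE.
have Hker : H *m v^T = 0.
  apply: trmx_inj; rewrite trmx_mul trmxK trmx0 Hv mulmxBl !ind_mul Heq.
  by rewrite subrr.
have Hv0 : v 0 u0 != 0.
  rewrite mxE; move: Hu0; case: (u0 \in S1); case: (u0 \in S2) => //= _.
have Hnz : v != 0 by apply/eqP => E; move: Hv0; rewrite E mxE eqxx.
have Hd := Hmin v Hker Hnz.
have Hw1 : (0 < wt v)%N.
  by rewrite /wt card_gt0; apply/set0Pn; exists u0; rewrite inE.
have Hw2 : (wt v <= #|S1| + #|S2|)%N.
  apply: (leq_trans (n := #|S1 :|: S2|)); last by rewrite cardsU leq_subr.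
  apply: subset_leq_card; apply/subsetP => u; rewrite !inE mxE.
  by case: (u \in S1); case: (u \in S2); rewrite //= subrr eqxx.
lia.
Qed.
Theorem lemma1 (R : realType) (mp np n : nat)
  (H : 'M['F_2]_(mp, np)) (G : 'M['F_2]_(mp, n)) (d : nat) (a : R)
  (D : 'rV[R]_n -> option 'rV['F_2]_n)
  (I : finType) (A : {set I}) (uf : I -> 'I_np) (z : 'rV[R]_n)
  (Aset Bset : nat -> 'I_np -> {set I}) :
  row_free G ->
  is_min_dist H d ->
  0 < a ->
  (forall v c, D v = Some c -> in_code G c) ->
  aux_sets A uf Aset Bset ->
  let T := ((d.-1) %/ 2)%N in
  let y := \sum_(i in A) xsig H G a (uf i) + z in
  let t := #|A| in
  (* no E1 *)
  (t <= T)%N ->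
  (* no E2: every input to D during the run of the form [c + z~/2^l] mod 2 is decoded to c *)
  (forall k, icr_reached H G a T D y t k ->
     forall (c : 'rV['F_2]_n) (l : nat), in_code G c ->
       D_input a (icr_y H G a T D y t k) (icr_t H G a T D y t k)
         = mod2v (map_mx f2R c + (2 ^+ l)^-1 *: ((2 * a)^-1 *: z)) ->
       D (D_input a (icr_y H G a T D y t k) (icr_t H G a T D y t k)) = Some c) ->
  (forall k, icr_reached H G a T D y t k ->
     [/\ icr_t H G a T D y t k = #|Aall Aset k|,
         icr_y H G a T D y t k = \sum_(i in Aall Aset k) xsig H G a (uf i) + (2 ^+ k)^-1 *: z,
         (exists S, Phi H G a T D (icr_y H G a T D y t k) (icr_t H G a T D y t k) = Some S) &
         icr_L H G a T D y t k = Uset uf (Aall Aset k :\: Aall Bset k)]) /\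
  (forall tau, icr_reached H G a T D y t tau ->
     #|icr_L H G a T D y t tau| = icr_t H G a T D y t tau ->
     Aall Bset tau = set0 /\ icr_L H G a T D y t tau = Uset uf (Aall Aset tau)).
Proof.
move=> HGf Hmd Ha HDc [HA0 [HB HA1]] T y t HtT HE2.
have HAu : forall k u i, i \in Aset k u -> uf i = u.
  elim=> [|k IH] u i; first by rewrite HA0 inE => /andP[_ /eqP].
  move=> Hi; apply: (IH u i); have [s1 _] := HA1 k u; have [s2 _] := HB k u.
  exact: (subsetP s2 _ (subsetP s1 _ Hi)).
have HBu : forall k u i, i \in Bset k u -> uf i = u.
  move=> k u i Hi; apply: (HAu k u i); have [s2 _] := HB k u; exact: (subsetP s2 _ Hi).
have HA0all : Aall Aset 0 = A.
  apply/setP => i; apply/bigcupP/idP => [[u _]|Hi]; first by rewrite HA0 inE => /andP[].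
  by exists (uf i) => //; rewrite HA0 inE Hi eqxx.
have HcardA : forall k, #|Aall Aset k| = (\sum_u #|Aset k u|)%N.
  by move=> k; rewrite /Aall (@card_union _ _ uf _ (HAu k)).
have HAS : forall k u, #|Aset k.+1 u| = (#|Aset k u| %/ 2)%N.
  by move=> k u; have [_ ->] := HA1 k u; have [_ ->] := HB k u; rewrite mulKn.
have Hmono : forall k, (#|Aall Aset k| <= t)%N.
  elim=> [|k IH]; first by rewrite HA0all.
  apply: leq_trans IH; rewrite !HcardA; apply: leq_sum => u _; by rewrite HAS leq_div.
pose S0 k := Uset uf (Aall Aset k :\: Aall Bset k).
have HS0 : forall k u, (u \in S0 k) = odd #|Aset k u|.
  move=> k u; apply/imsetP/idP.
  - case=> i; rewrite inE => /andP[Hnb /bigcupP[u' _ Hi]] ->.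
    have Eu := HAu _ _ _ Hi; subst u'.
    have Hin : i \in Aset k (uf i) :\: Bset k (uf i).
      rewrite inE Hi andbT; apply: contra Hnb => Hb; apply/bigcupP; by exists (uf i).
    have : (0 < #|Aset k (uf i) :\: Bset k (uf i)|)%N by apply/card_gt0P; exists i.
    have [sB cB] := HB k (uf i).
    rewrite cardsD (setIidPr sB) cB.
    move: (#|Aset k (uf i)|) => m.
    have := divn_eq m 2; rewrite modn2; case: (odd m) => //= E Hc; exfalso; lia.
  - move=> Hodd; have [sB cB] := HB k u.
    have : (0 < #|Aset k u :\: Bset k u|)%N.
      rewrite cardsD (setIidPr sB) cB; move: Hodd.
      move: (#|Aset k u|) => m.
      have := divn_eq m 2; rewrite modn2; case: (odd m) => //= E Hc; lia.
    case/card_gt0P => i; rewrite inE => /andP[Hnb Hi].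
    exists i; last by rewrite (HAu _ _ _ Hi).
    rewrite inE; apply/andP; split.
      apply/negP => /bigcupP[u' _ Hb]; have := HBu _ _ _ Hb; rewrite (HAu _ _ _ Hi) => Eu.
      by subst u'; rewrite Hb in Hnb.
    by apply/bigcupP; exists u.
have HS0sum : forall k (V : nmodType) (F : 'I_np -> V),
    \sum_(u in S0 k) F u = \sum_u F u *+ odd #|Aset k u|.
  move=> k V F; rewrite big_mkcond; apply: eq_bigr => u _; rewrite HS0; by case: odd.
have HS0card : forall k, #|S0 k| = (\sum_u odd #|Aset k u|)%N.
  move=> k; rewrite -sum1_card (HS0sum k nat (fun _ => 1%N)).
  by apply: eq_bigr => u _; rewrite natn.
have HPhi : forall k, icr_reached H G a T D y t k ->
    icr_t H G a T D y t k = #|Aall Aset k| ->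
    icr_y H G a T D y t k = \sum_(i in Aall Aset k) xsig H G a (uf i) + (2 ^+ k)^-1 *: z ->
    Phi H G a T D (icr_y H G a T D y t k) (icr_t H G a T D y t k) = Some (S0 k).
  move=> k Hr Ht Hy.
  pose c := \sum_(i in Aall Aset k) cw H G (uf i).
  pose h := \sum_(i in Aall Aset k) (col (uf i) H)^T.
  have Hch : c = h *m G by rewrite /c /h mulmx_suml.
  have HD : D (D_input a (icr_y H G a T D y t k) (icr_t H G a T D y t k)) = Some c.
    apply: (HE2 k Hr c k); first by exists h.
    rewrite Hy Ht; apply/rowP => j; rewrite !(mxE, summxE).
    rewrite -mod2_sumF2.
    congr mod2.
    have Ha0 : 2 * a != 0 by rewrite mulf_eq0 negb_or pnatr_eq0 /= gt_eqF.
    rewrite mulrDl mulr_suml.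
    under eq_bigr => i _ do rewrite /xsig mxE mulrC mulKf //.
    rewrite sumrB sumr_const -mulr_natr.
    field.
    by rewrite mul1r expf_neq0 ?pnatr_eq0 ?andbT // gt_eqF.
  rewrite /Phi HD.
  have -> : c *m pinvmx G = h by rewrite Hch -mulmxA mulmxVp // mulmx1.
  rewrite /synd_dec.
  have Hsum : \sum_(u in S0 k) (col u H)^T = h.
    rewrite HS0sum /h /Aall (@sum_union I np uf (Aset k) _ (fun u => (col u H)^T) (HAu k)).
    by apply: eq_bigr => u _; rewrite [in RHS]F2v_muln.
  have HS0T : (#|S0 k| <= T)%N.
    rewrite HS0card; apply: leq_trans HtT; apply: leq_trans (Hmono k); rewrite HcardA.
    by apply: leq_sum => u _; rewrite -modn2 leq_mod.
  case: pickP => [S /andP[HS1 /eqP HS2]|Hn].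
    congr Some; apply: (@synd_unique _ _ H d S (S0 k) Hmd HS1 HS0T).
    by rewrite HS2 Hsum.
  by have := Hn (S0 k); rewrite HS0T Hsum eqxx.
have Hdec : forall m : nat, m = (odd m + 2 * (m %/ 2))%N.
  by move=> m; rewrite {1}(divn_eq m 2) modn2; lia.
have Hinv : forall k, icr_reached H G a T D y t k ->
    icr_t H G a T D y t k = #|Aall Aset k| /\
    icr_y H G a T D y t k = \sum_(i in Aall Aset k) xsig H G a (uf i) + (2 ^+ k)^-1 *: z.
  elim=> [|k IH] Hr.
    split; first by rewrite HA0all.
    by rewrite HA0all expr0 invr1 scale1r.
  have Hrk : icr_reached H G a T D y t k.
    by move=> k' Hk'; apply: Hr; apply: (ltn_trans Hk').
  have [Ht Hy] := IH Hrk.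
  have HL : icr_L H G a T D y t k = S0 k by rewrite /icr_L /Lset HPhi.
  split.
    change (icr_t H G a T D y t k.+1) with
      ((icr_t H G a T D y t k - #|icr_L H G a T D y t k|) %/ 2)%N.
    rewrite HL Ht HS0card !HcardA.
    have E : ((\sum_u #|Aset k u|) = (\sum_u odd #|Aset k u|) + 2 * (\sum_u #|Aset k.+1 u|))%N.
      rewrite big_distrr -big_split; apply: eq_bigr => u _; rewrite HAS; exact: Hdec.
    rewrite E; lia.
  change (icr_y H G a T D y t k.+1) with
    (2^-1 *: (icr_y H G a T D y t k - \sum_(u in icr_L H G a T D y t k) xsig H G a u)).
  rewrite HL Hy HS0sum /Aall (@sum_union I np uf (Aset k) _ (xsig H G a) (HAu k)) (@sum_union I np uf (Aset k.+1) _ (xsig H G a) (HAu k.+1)).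
  have E : (\sum_u xsig H G a u *+ #|Aset k u|) =
      (\sum_u xsig H G a u *+ odd #|Aset k u|) + (\sum_u xsig H G a u *+ #|Aset k.+1 u|) *+ 2.
    rewrite -sumrMnl -big_split; apply: eq_bigr => u _.
    rewrite HAS -mulrnA /= -mulrnDr mulnC -Hdec. done.
  rewrite E; set P := \sum_u _ *+ odd _; set Q := \sum_u _ *+ #|Aset k.+1 _|.
  rewrite addrAC (addrC P) addrK scalerDr -scaler_nat [2^-1 *: (2 *: Q)]scalerA mulVf ?pnatr_eq0 // scale1r.
  by rewrite exprS invfM scalerA.
split.
  move=> k Hr; have [Ht Hy] := Hinv k Hr; have HP := HPhi k Hr Ht Hy.
  split => //; first by exists (S0 k).
  by rewrite /icr_L /Lset HP.
move=> tau Hr Hc; have [Ht Hy] := Hinv tau Hr; have HP := HPhi tau Hr Ht Hy.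
have HL : icr_L H G a T D y t tau = S0 tau by rewrite /icr_L /Lset HP.
move: Hc; rewrite HL Ht HS0card HcardA => Hc.
have HB0 : forall u, Bset tau u = set0.
  have E : ((\sum_u #|Aset tau u|) = (\sum_u odd #|Aset tau u|) + (\sum_u #|Bset tau u|))%N.
    rewrite -big_split; apply: eq_bigr => u _; have [_ ->] := HB tau u; exact: Hdec.
  have : ((\sum_u #|Bset tau u|) == 0)%N by lia.
  rewrite sum_nat_eq0 => /forallP Hall u.
  by apply/eqP; rewrite -cards_eq0; have := Hall u.
have HBall : Aall Bset tau = set0.
  apply/setP => i; rewrite inE; apply/negP => /bigcupP[u _]; by rewrite HB0 inE.
split => //.
by rewrite /S0 HBall setD0.
Qed.
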